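(* Let $\mathcal{G}=(V,E)$ be an undirected graph on $V=\{v_1,\dots,v_k\}$, let $\mathcal{S}$ be the set of valid states, and let $\mathcal{C}$ be a collection of correlation sets, each of size at most $2$, with associated mean losses $\mu_i^s$ (all as defined in the context). Let $\mathcal{K}\subseteq\mathcal{S}$ be a cover of $\mathcal{C}$. For $i,j\in[k]$ and $b\in\{0,1\}$, define $X^{i,j}_b:=\mu_i^{s_2}-\mu_i^{s_1}$, where $(s_1,s_2)$ is an $(i,j,b)$-pair contained in $\mathcal{K}$ (so $s_1(j)=0$, $s_2(j)=1$), whenever $\{i,j\}\in\mathcal{C}$ and $(i,j,b)$ is a dichotomy; set $X^{i,j}_b:=0$ otherwise. Then for every state $s\in\mathcal{S}$ and every $i\in[k]$ with $s(i)=b$, and every state $s'\in\mathcal{K}$ with $s'(i)=b$, $$\mu_i^s=\mu_i^{s'}+\sum_{j=1}^k X^{i,j}_b\big[\mathbf{1}(s(j)=1)\mathbf{1}(s'(j)=0)-\mathbf{1}(s(j)=0)\mathbf{1}(s'(j)=1)\big].$$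
   Context: Write $[k]=\{1,\dots,k\}$. The valid states are $\mathcal{S}=\{s\in\{0,1\}^k : \{v_i: s(i)=1\}\text{ is an independent set of }\mathcal{G}\}$ ($s(i)=1$ means criterion $i$ is ''fixed'', $s(i)=0$ ''unfixed''). A collection of correlation sets $\mathcal{C}=\{C_1,\dots,C_n\}$ consists of subsets of $[k]$ of size at most $m$ (here $m=2$). For each state $s$ and each $j\in[n]$ there is a parameter $\theta_j^s\ge 0$ which depends only on the restriction of $s$ to the coordinates in $C_j$ (i.e. $\theta_j^s=\theta_j^{s'}$ whenever $s$ and $s'$ agree on $C_j$). The mean loss of criterion $i$ at state $s$ is $\mu_i^s=\sum_{j=1}^n\theta_j^s\,\mathbf{1}(i\in C_j)$. For $i\neq j$ and $b\in\{0,1\}$, $(i,j,b)$ is a dichotomy if there exist $s,s'\in\mathcal{S}$ with $s(j)=0$, $s'(j)=1$ and $s(i)=s'(i)=b$. An $(i,j,b)$-pair is a pair $(s,s')$ of states that agree in every coordinate except $j$, with $s(i)=s'(i)=b$, $s(j)=0$, $s'(j)=1$. A subset $\mathcal{K}\subseteq\mathcal{S}$ is a cover of $\mathcal{C}$ if (1) for every $\{i,j\}\in\mathcal{C}$ and every dichotomy $(i,j,b)$ (in either order of $i,j$), $\mathcal{K}$ contains an $(i,j,b)$-pair, and (2) for every singleton $\{i\}\in\mathcal{C}$, $\mathcal{K}$ contains states $s,s'$ with $s(i)=0$, $s'(i)=1$ and $s(l)=s'(l)$ for all $l\neq i$. *)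

(* Defs.v *)
From HB Require Import structures.
From mathcomp Require Import all_boot all_order all_algebra.
Set Implicit Arguments. Unset Strict Implicit. Unset Printing Implicit Defensive.
Import Order.TTheory GRing.Theory Num.Theory.
Local Open Scope ring_scope.

(* Vertices / criteria are 'I_k (criterion i <-> v_i); a state is a boolean
   function on 'I_k, s i = true meaning "fixed". *)
Notation state k := {ffun 'I_k -> bool}.

Definition valid_state (k : nat) (e : rel 'I_k) (s : state k) : bool :=
  [forall i, forall j, (s i && s j) ==> ~~ e i j].

Definition mean_loss (R : pzSemiRingType) (k n : nat) (C : 'I_n -> {set 'I_k})
  (theta : 'I_n -> state k -> R) (i : 'I_k) (s : state k) : R :=
  \sum_(l < n) theta l s * (i \in C l)%:R.

Definition in_corr (k n : nat) (C : 'I_n -> {set 'I_k}) (A : {set 'I_k}) : Prop :=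
  exists l, C l = A.

Definition dichotomy (k : nat) (e : rel 'I_k) (i j : 'I_k) (b : bool) : Prop :=
  i != j /\ exists s s' : state k,
    [/\ valid_state e s && valid_state e s', s j = false, s' j = true,
        s i = b & s' i = b].

Definition ijb_pair (k : nat) (i j : 'I_k) (b : bool) (s s' : state k) : Prop :=
  [/\ forall l, l != j -> s l = s' l, s i = b, s' i = b, s j = false & s' j = true].

Definition is_cover (k n : nat) (e : rel 'I_k) (C : 'I_n -> {set 'I_k})
  (K : {set state k}) : Prop :=
  (forall (i j : 'I_k) (b : bool), in_corr C [set i; j] -> dichotomy e i j b ->
     exists s1 s2, [/\ s1 \in K, s2 \in K & ijb_pair i j b s1 s2]) /\
  (forall i : 'I_k, in_corr C [set i] ->
     exists s s', [/\ s \in K, s' \in K, s i = false, s' i = true &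
                      forall l, l != i -> s l = s' l]).

(* Main.v *)
Require Import Defs.
From HB Require Import structures.
From mathcomp Require Import all_boot all_order all_algebra.
Import Order.TTheory GRing.Theory Num.Theory.
Local Open Scope ring_scope.

Lemma pair_set (k : nat) (A : {set 'I_k}) i j :
  (#|A| <= 2)%N -> i \in A -> j \in A -> i != j -> A = [set i; j].
Proof.
move=> cA Hi Hj Hij; apply/eqP; rewrite eq_sym eqEcard.
by rewrite subUset !sub1set Hi Hj cards2 Hij.
Qed.
Arguments pair_set {k A i j}.

Lemma cP (R : numDomainType) (x y : bool) :
  (((x && ~~ y)%:R - (~~ x && y)%:R : R) != 0) = (x != y).
Proof. by case: x; case: y; rewrite /= ?subrr ?subr0 ?sub0r ?oppr_eq0 ?oner_eq0 ?eqxx. Qed.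
Theorem theorem1 (R : realFieldType) (k n : nat) (e : rel 'I_k)
  (e_sym : symmetric e) (e_irr : irreflexive e)
  (C : 'I_n -> {set 'I_k}) (C_size : forall l, (#|C l| <= 2)%N)
  (theta : 'I_n -> state k -> R)
  (theta_ge0 : forall l s, valid_state e s -> 0 <= theta l s)
  (theta_loc : forall l s s', valid_state e s -> valid_state e s' ->
       (forall i, i \in C l -> s i = s' i) -> theta l s = theta l s')
  (K : {set state k})
  (K_valid : forall s, s \in K -> valid_state e s)
  (K_cover : is_cover e C K)
  (X : 'I_k -> 'I_k -> bool -> R)
  (X_def : forall i j b,
     (in_corr C [set i; j] /\ dichotomy e i j b ->
        exists s1 s2, [/\ s1 \in K, s2 \in K, ijb_pair i j b s1 s2 &
          X i j b = mean_loss C theta i s2 - mean_loss C theta i s1]) /\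
     (~ (in_corr C [set i; j] /\ dichotomy e i j b) -> X i j b = 0)) :
  forall (s : state k) (i : 'I_k) (b : bool), valid_state e s -> s i = b ->
  forall s' : state k, s' \in K -> s' i = b ->
    mean_loss C theta i s =
      mean_loss C theta i s' +
      \sum_(j < k) X i j b * ((s j && ~~ s' j)%:R - (~~ s j && s' j)%:R).

move=> s i b vs si s' s'K s'i.
have vs' := K_valid _ s'K.
have z0 : forall (c : bool) (x : R), ~~ c -> (c%:R : R) * x = 0 by case=> // x _; rewrite mul0r.
set D := fun l => theta l s - theta l s'.
pose P := fun (l : 'I_n) (j : 'I_k) => [&& (s j != s' j), i \in C l & j \in C l].
have Hdiff : mean_loss C theta i s - mean_loss C theta i s' =
   \sum_(l < n) \sum_(j < k) (P l j)%:R * D l.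
  rewrite /mean_loss -sumrB; apply: eq_bigr => l _.
  rewrite -mulrBl.
  have [iC|iC] := boolP (i \in C l); last first.
    rewrite mulr0 big1 // => j _; by rewrite /P (negbTE iC) andbF mul0r.
  rewrite mulr1.
  have [j Pj|noP] := pickP (P l).
    rewrite (bigD1 j) //= Pj mul1r big1 ?addr0 //.
    move=> j' nj'; have [Pj'|] := boolP (P l j'); last by move=> nP; apply: z0.
    exfalso.
    move: Pj Pj' => /and3P[d1 _ jC] /and3P[d2 _ j'C].
    have ij : i != j by apply: contra d1 => /eqP <-; rewrite si s'i.
    have ij' : i != j' by apply: contra d2 => /eqP <-; rewrite si s'i.
    move: j'C; rewrite (pair_set (C_size l) iC jC ij) !inE (negbTE nj') orbF.
    by rewrite eq_sym (negbTE ij').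
  rewrite big1 => [|j _]; last by apply: z0; rewrite noP.
  apply/eqP; rewrite subr_eq0; apply/eqP; apply: theta_loc => // x xC.
  apply/eqP; apply: contraFT (noP x) => nx; by rewrite /P nx iC xC.
have -> : mean_loss C theta i s = mean_loss C theta i s' +
   (mean_loss C theta i s - mean_loss C theta i s') by rewrite addrC subrK.
congr (_ + _); rewrite Hdiff exchange_big /=; apply: eq_bigr => j _.
have [sj|nsj] := eqVneq (s j) (s' j).
  rewrite big1 => [|l _]; last by rewrite /P sj eqxx mul0r.
  by rewrite sj; case: (s' j); rewrite /= subrr mulr0.
have ij : i != j by apply: contra nsj => /eqP <-; rewrite si s'i.
have [H1 H2] := X_def i j b.
have [l0 /andP[iC0 jC0]|nol] := pickP (fun l => (i \in C l) && (j \in C l)).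
  have ic : in_corr C [set i; j] by exists l0; exact: pair_set.
  have dc : dichotomy e i j b.
    split=> //; case Esj: (s j).
      exists s', s; split => //; first by rewrite vs vs'.
      by move: nsj; rewrite Esj; case: (s' j).
    by exists s, s'; split => //; [rewrite vs vs' | move: nsj; rewrite Esj; case: (s' j)].
  have [s1 [s2 [s1K s2K [agr s1i s2i s1j s2j] ->]]] := H1 (conj ic dc).
  have v1 := K_valid _ s1K; have v2 := K_valid _ s2K.
  rewrite /mean_loss -sumrB mulr_suml; apply: eq_bigr => l _.
  rewrite /P nsj /= -mulrBl.
  have [iC|iC] := boolP (i \in C l); last by rewrite /= !mulr0n mulr0 !mul0r.
  have [jC|jC] /= := boolP (j \in C l); last first.
    have -> : theta l s2 = theta l s1.
      apply: theta_loc => // x xC; apply/esym/agr; apply: contraNneq jC => ex.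
      by rewrite -ex.
    by rewrite subrr /= mulr0n !mul0r.
  have Cl := pair_set (C_size l) iC jC ij.
  have loc : forall t u, valid_state e t -> valid_state e u -> t i = u i -> t j = u j ->
      theta l t = theta l u.
    move=> t u vt vu ti tj; apply: theta_loc => // x; rewrite Cl !inE.
    by case/orP=> /eqP ->.
  rewrite mul1r mulr1; move: nsj; case Esj: (s j); case Es'j: (s' j) => // _.
    rewrite /D (loc s s2) ?si ?s2i ?Esj ?s2j // (loc s' s1) ?s'i ?s1i ?Es'j ?s1j //.
    by rewrite /= subr0 mulr1.
  rewrite /D (loc s s1) ?si ?s1i ?Esj ?s1j // (loc s' s2) ?s'i ?s2i ?Es'j ?s2j //.
  by rewrite /= sub0r mulrN1 opprB.
rewrite H2 ?mul0r.
  by rewrite big1 // => l _; rewrite /P nsj /= nol mul0r.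
move=> [[l Hl] _]; move: (nol l); rewrite Hl !inE !eqxx orbT //.
Qed.
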